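(* Let $p$ be an odd prime and let $\zeta\in\mathbb{Z}_p$ be such that $-\zeta$ is not a square modulo $p$. Let $k\ge0$ and let $A,B,C,A',B',C'\in\mathbb{Z}_p$ with $p^k$ dividing each of $B,C,B',C'$. Suppose that, coefficientwise, $$(x^2+pA+\zeta)^2-p^2(Bx+C)^2\equiv (x^2+pA'+\zeta)^2-p^2(B'x+C')^2\pmod{p^{2k+3}}.$$ Then $A\equiv A'\pmod{p^{2k+2}}$. Consequently $(x^2+pA+\zeta)^2\equiv(x^2+pA'+\zeta)^2\pmod{p^{2k+3}}$. *)

(* Defs.v *)
From HB Require Import structures.
From mathcomp Require Import all_boot all_order all_algebra.
From mathcomp Require Import boolp.
From Stdlib Require Import ProofIrrelevance FunctionalExtensionality.

Set Implicit Arguments.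
Unset Strict Implicit.
Unset Printing Implicit Defensive.

Import Order.TTheory GRing.Theory Num.Theory.
Local Open Scope ring_scope.

(* The ring Z_p of p-adic integers, constructed as the inverse limit         *)
(*   Z_p = lim_n Z/p^n Z,                                                    *)
(* i.e. sequences (x_n)_n of integers with x_n the canonical representative  *)
(* (in [0, p^n)) of a residue mod p^n, compatible under reduction:           *)
(*   x_{n+1} mod p^n = x_n.                                                  *)
(* (For a degenerate p < 2 we use the base maxn p 2, as MathComp does for    *)
(* 'Z_p; the theorem below assumes p prime, where the base is exactly p.)    *)

Definition zbase (p : nat) : int := (maxn p 2)%:Z.

Lemma modz_modM (x m d : int) : modz (modz x (m * d)) m = modz x m.
Proof.
by rewrite [in RHS](intdiv.divz_eq x (m * d)) (mulrC m d) mulrA modzMDl.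
Qed.

Record Zpadic (p : nat) : Type := MkZp {
  zv : nat -> int;
  zv_compat : forall n, modz (zv n.+1) (zbase p ^+ n) = zv n
}.

Section ZpRing.
Variable p : nat.
Local Notation b := (zbase p).

Lemma zp_eq (x y : Zpadic p) : zv x = zv y -> x = y.
Proof.
case: x y => [f Hf] [g Hg] /= E; subst g.
by rewrite (proof_irrelevance _ Hf Hg).
Qed.

Lemma zv_mod (x : Zpadic p) n : modz (zv x n) (b ^+ n) = zv x n.
Proof. by rewrite -zv_compat modz_mod. Qed.

Lemma mkZ_compat (f : nat -> int)
  (H : forall n, modz (f n.+1) (b ^+ n) = modz (f n) (b ^+ n)) n :
  modz (modz (f n.+1) (b ^+ n.+1)) (b ^+ n) = modz (f n) (b ^+ n).
Proof. by rewrite exprSr modz_modM H. Qed.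

Definition mkZ (f : nat -> int)
  (H : forall n, modz (f n.+1) (b ^+ n) = modz (f n) (b ^+ n)) : Zpadic p :=
  @MkZp p (fun n => modz (f n) (b ^+ n)) (mkZ_compat H).

Lemma zv_mkZ f H n : zv (@mkZ f H) n = modz (f n) (b ^+ n).
Proof. by []. Qed.

Definition zp_zero : Zpadic p := @mkZ (fun _ => 0) (fun n => erefl).
Definition zp_one : Zpadic p := @mkZ (fun _ => 1) (fun n => erefl).

Lemma zp_add_compat (x y : Zpadic p) n :
  modz (zv x n.+1 + zv y n.+1) (b ^+ n) = modz (zv x n + zv y n) (b ^+ n).
Proof. by rewrite -modzDm !zv_compat. Qed.
Definition zp_add (x y : Zpadic p) : Zpadic p := mkZ (zp_add_compat x y).

Lemma zp_opp_compat (x : Zpadic p) n :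
  modz (- zv x n.+1) (b ^+ n) = modz (- zv x n) (b ^+ n).
Proof. by rewrite -modzNm zv_compat. Qed.
Definition zp_opp (x : Zpadic p) : Zpadic p := mkZ (zp_opp_compat x).

Lemma zp_mul_compat (x y : Zpadic p) n :
  modz (zv x n.+1 * zv y n.+1) (b ^+ n) = modz (zv x n * zv y n) (b ^+ n).
Proof. by rewrite -modzMm !zv_compat. Qed.
Definition zp_mul (x y : Zpadic p) : Zpadic p := mkZ (zp_mul_compat x y).

HB.instance Definition _ := gen_eqMixin (Zpadic p).
HB.instance Definition _ := gen_choiceMixin (Zpadic p).

Lemma zp_addA : associative zp_add.
Proof.
move=> x y z; apply: zp_eq; apply: functional_extensionality => n /=.
by rewrite modzDmr modzDml addrA.
Qed.

Lemma zp_addC : commutative zp_add.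
Proof.
by move=> x y; apply: zp_eq; apply: functional_extensionality => n /=; rewrite addrC.
Qed.

Lemma zp_add0 : left_id zp_zero zp_add.
Proof.
by move=> x; apply: zp_eq; apply: functional_extensionality => n /=;
  rewrite mod0z add0r zv_mod.
Qed.

Lemma zp_addN : left_inverse zp_zero zp_opp zp_add.
Proof.
by move=> x; apply: zp_eq; apply: functional_extensionality => n /=;
  rewrite modzDml addNr.
Qed.

HB.instance Definition _ := GRing.isZmodule.Build (Zpadic p)
  zp_addA zp_addC zp_add0 zp_addN.

Lemma zp_mulA : associative zp_mul.
Proof.
move=> x y z; apply: zp_eq; apply: functional_extensionality => n /=.
by rewrite modzMmr modzMml mulrA.
Qed.

Lemma zp_mulC : commutative zp_mul.
Proof.
by move=> x y; apply: zp_eq; apply: functional_extensionality => n /=; rewrite mulrC.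
Qed.

Lemma zp_mul1 : left_id zp_one zp_mul.
Proof.
by move=> x; apply: zp_eq; apply: functional_extensionality => n /=;
  rewrite modzMml mul1r zv_mod.
Qed.

Lemma zp_mulDl : left_distributive zp_mul zp_add.
Proof.
move=> x y z; apply: zp_eq; apply: functional_extensionality => n /=.
by rewrite modzMml modzDm mulrDl.
Qed.

Lemma zp_one_neq0 : zp_one != zp_zero.
Proof.
apply/eqP => /(f_equal (fun z => zv z 1%N)) /=.
rewrite expr1 mod0z modz_small //.
by rewrite ler01 /= /zbase ltz_nat leq_max orbT.
Qed.

HB.instance Definition _ := GRing.Zmodule_isComNzRing.Build (Zpadic p)
  zp_mulA zp_mulC zp_mul1 zp_mulDl zp_one_neq0.

End ZpRing.

Definition rdvd (R : comNzRingType) (d x : R) : Prop := exists y : R, x = d * y.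

Definition polycong (R : comNzRingType) (m : R) (P Q : {poly R}) : Prop :=
  forall i : nat, rdvd m (P`_i - Q`_i).

(* Main.v *)
Require Import Defs.
From HB Require Import structures.
From mathcomp Require Import all_boot all_order all_algebra.
From mathcomp Require Import ring.

Import GRing.Theory Num.Theory.
Local Open Scope ring_scope.
From Stdlib Require Import FunctionalExtensionality.

Lemma nsq_zero (F : fieldType) (z t w : F) :
  (forall s : F, s ^+ 2 + z != 0) -> t ^+ 2 + z * w ^+ 2 = 0 -> w = 0.
Proof.
move=> nsq H; apply/eqP; apply: contraT => w0.
have := nsq (t / w); rewrite (_ : (t / w) ^+ 2 + z = (t ^+ 2 + z * w ^+ 2) / w ^+ 2).
  by rewrite H mul0r eqxx.
by field.
Qed.

Lemma field_arg (F : fieldType) (z b b' c c' : F) :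
  (2%:R : F) != 0 -> (forall s : F, s ^+ 2 + z != 0) ->
  b * c = b' * c' -> z * (b ^+ 2 - b' ^+ 2) = c ^+ 2 - c' ^+ 2 ->
  b ^+ 2 = b' ^+ 2.
Proof.
move=> two nsq Hbc Hz.
have z0 : z != 0 by have := nsq 0; rewrite expr0n /= add0r.
set u := c ^+ 2 + z * b ^+ 2; set u' := c' ^+ 2 + z * b' ^+ 2.
have E : (u - u') * (u + u') = 0.
  have -> : (u - u') * (u + u') =
    ((c ^+ 2 - c' ^+ 2) - z * (b ^+ 2 - b' ^+ 2)) *
      (c ^+ 2 - z * b ^+ 2 + (c' ^+ 2 - z * b' ^+ 2))
    + 4%:R * z * (b * c - b' * c') * (b * c + b' * c') by rewrite /u /u'; ring.
  by rewrite Hz Hbc !subrr !(mul0r, mulr0) addr0.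
have Hv : (c ^+ 2 - z * b ^+ 2) - (c' ^+ 2 - z * b' ^+ 2) = 0.
  have -> : (c ^+ 2 - z * b ^+ 2) - (c' ^+ 2 - z * b' ^+ 2) =
    (c ^+ 2 - c' ^+ 2) - z * (b ^+ 2 - b' ^+ 2) by ring.
  by rewrite Hz subrr.
move/eqP: E; rewrite mulf_eq0 => /orP [/eqP E|/eqP E].
  apply/eqP; rewrite -subr_eq0; apply/eqP.
  have : (2%:R * z) * (b ^+ 2 - b' ^+ 2) = 0.
    have -> : (2%:R * z) * (b ^+ 2 - b' ^+ 2) = (u - u') -
      ((c ^+ 2 - z * b ^+ 2) - (c' ^+ 2 - z * b' ^+ 2)) by rewrite /u /u'; ring.
    by rewrite E Hv subrr.
  by move/eqP; rewrite mulf_eq0 mulf_eq0 (negbTE two) (negbTE z0) /= => /eqP.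
have e1 : c ^+ 2 + z * b' ^+ 2 = 0.
  apply: (mulfI two); rewrite mulr0.
  have -> : 2%:R * (c ^+ 2 + z * b' ^+ 2) = (u + u') +
      ((c ^+ 2 - z * b ^+ 2) - (c' ^+ 2 - z * b' ^+ 2)) by rewrite /u /u'; ring.
  by rewrite E Hv addr0.
have e2 : c' ^+ 2 + z * b ^+ 2 = 0.
  apply: (mulfI two); rewrite mulr0.
  have -> : 2%:R * (c' ^+ 2 + z * b ^+ 2) = (u + u') -
      ((c ^+ 2 - z * b ^+ 2) - (c' ^+ 2 - z * b' ^+ 2)) by rewrite /u /u'; ring.
  by rewrite E Hv subrr.
by rewrite (@nsq_zero F _ _ _ nsq e1) (@nsq_zero F _ _ _ nsq e2).
Qed.
Section Zp.
Variable p : nat.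
Hypothesis pp : prime p.
Local Notation R := (Zpadic p).
Local Notation P := (p%:R : R).

Lemma zbaseE : zbase p = p%:Z.
Proof. by rewrite /zbase; congr Posz; apply/maxn_idPl; exact: prime_gt1. Qed.

Lemma pz_gt0 : (0 < p%:Z)%R.
Proof. by rewrite ltz_nat prime_gt0. Qed.

Lemma zvD (x y : R) n : zv (x + y) n = ((zv x n + zv y n) %% (zbase p ^+ n))%Z.
Proof. by []. Qed.
Lemma zvM (x y : R) n : zv (x * y) n = ((zv x n * zv y n) %% (zbase p ^+ n))%Z.
Proof. by []. Qed.
Lemma zvN (x : R) n : zv (- x) n = ((- zv x n) %% (zbase p ^+ n))%Z.
Proof. by []. Qed.
Lemma zv0 n : zv (0 : R) n = 0.
Proof. by rewrite /= mod0z. Qed.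
Lemma zv1 n : zv (1 : R) n = (1 %% (zbase p ^+ n))%Z.
Proof. by []. Qed.

Lemma zv_nat m n : zv (m%:R : R) n = ((m%:Z) %% (zbase p ^+ n))%Z.
Proof.
elim: m => [|m IH]; first by rewrite zv0 mod0z.
by rewrite mulrS zvD IH zv1 modzDm -addn1 PoszD addrC.
Qed.

Lemma modzMp (a m : int) : modz (p%:Z * a) (p%:Z * m) = p%:Z * modz a m.
Proof.
by rewrite /modz divzMpl ?pz_gt0 // mulrBr mulrA (mulrC _ p%:Z) !mulrA.
Qed.

Lemma zv_pmul (x : R) n : zv (P * x) n.+1 = p%:Z * zv x n.
Proof.
rewrite zvM zv_nat modzMml zbaseE exprS modzMp -zbaseE zv_compat.
by rewrite zbaseE.
Qed.

Lemma zv_eq0 (x : R) : (forall n, zv x n = 0) -> x = 0.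
Proof.
move=> H; apply: zp_eq; apply: functional_extensionality => n.
by rewrite H zv0.
Qed.

Lemma P_reg (x : R) : P * x = 0 -> x = 0.
Proof.
move=> H; apply: zv_eq0 => n.
have := zv_pmul x n; rewrite H zv0 => /esym/eqP.
by rewrite mulf_eq0 (negbTE (lt0r_neq0 pz_gt0)) /= => /eqP.
Qed.

Lemma Pn_cancel n (x y : R) : P ^+ n * x = P ^+ n * y -> x = y.
Proof.
elim: n => [|n IH]; first by rewrite !mul1r.
move=> E; apply: IH; apply/eqP; rewrite -subr_eq0; apply/eqP; apply: P_reg.
by rewrite mulrBr !mulrA -!exprS E subrr.
Qed.

Lemma zv_0 (x : R) : zv x 0 = 0.
Proof. by rewrite -zv_mod expr0 modz1. Qed.

Lemma Fp_modz (a : int) : ((modz a p%:Z)%:~R : 'F_p) = a%:~R.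
Proof.
rewrite /modz intrB intrM.
by rewrite (_ : (p%:Z)%:~R = 0) ?mulr0 ?subr0 // -pmulrn (pchar_Fp_0 pp).
Qed.

Definition phi (x : R) : 'F_p := (zv x 1)%:~R.

Lemma zv1E (x : R) : zv x 1 = modz (zv x 1) p%:Z.
Proof. by rewrite -{1}zv_mod zbaseE expr1. Qed.

Lemma phiB : zmod_morphism phi.
Proof.
move=> x y; rewrite /phi zvD zvN zbaseE expr1 Fp_modz intrD.
by rewrite Fp_modz intrN.
Qed.

Lemma phiM : monoid_morphism phi.
Proof.
split; first by rewrite /phi zv1 zbaseE expr1 Fp_modz.
by move=> x y; rewrite /phi zvM zbaseE expr1 Fp_modz intrM.
Qed.

HB.instance Definition _ := GRing.isZmodMorphism.Build R 'F_p phi phiB.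
HB.instance Definition _ := GRing.isMonoidMorphism.Build R 'F_p phi phiM.

Lemma phiP : phi P = 0.
Proof. by rewrite rmorph_nat (pchar_Fp_0 pp). Qed.

Lemma zv_modp (x : R) n : modz (zv x n.+1) p%:Z = zv x 1.
Proof.
elim: n => [|n IH]; first by rewrite -zv1E.
by rewrite -(modz_modM _ p%:Z (p%:Z ^+ n)) -exprS -zbaseE zv_compat zbaseE.
Qed.

Lemma phi_ker (x : R) : phi x = 0 -> rdvd P x.
Proof.
move=> H.
have z1 : zv x 1 = 0.
  have ge : (0 <= zv x 1)%R by rewrite zv1E modz_ge0 // lt0r_neq0 // pz_gt0.
  have lt : (zv x 1 < p%:Z)%R.
    by rewrite zv1E (_ : p%:Z = `|p%:Z|%R) ?ltz_mod // lt0r_neq0 // pz_gt0.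
  move: H lt; rewrite /phi -(gez0_abs ge).
  move: (`|zv x 1|%N) => m; rewrite -pmulrn => H lt.
  have := val_Fp_nat pp m; rewrite H /= modn_small //.
  by move=> <-.
have dv n : (p%:Z %| zv x n.+1)%Z by apply/dvdz_mod0P; rewrite zv_modp.
pose f n := divz (zv x n.+1) p%:Z.
have fE n : zv x n.+1 = f n * p%:Z by rewrite divzK.
have pn0 : p%:Z != 0 by rewrite lt0r_neq0 // pz_gt0.
have fm n : modz (f n) (p%:Z ^+ n) = f n.
  apply: (mulfI pn0); rewrite -modzMp -exprS (mulrC _ (f n)) -fE.
  by rewrite -zbaseE zv_mod.
have H2 n : modz (f n.+1) (zbase p ^+ n) = modz (f n) (zbase p ^+ n).
  rewrite zbaseE fm; apply: (mulfI pn0); rewrite -modzMp -exprS.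
  by rewrite (mulrC _ (f n.+1)) -fE (mulrC _ (f n)) -fE -zbaseE zv_compat.
exists (mkZ H2); apply: zp_eq; apply: functional_extensionality => m.
case: m => [|n]; first by rewrite !zv_0.
by rewrite zv_pmul zv_mkZ zbaseE fm mulrC -fE.
Qed.

Lemma rdvd_phi (x : R) : rdvd P x -> phi x = 0.
Proof. case=> y ->; rewrite rmorphM.
have E : phi P = 0 := phiP.
by rewrite [X in X * _]E mul0r. Qed.

Lemma two_Fp (po : odd p) : (2%:R : 'F_p) != 0.
Proof.
have p2 : (2 < p)%N.
  have p1 := prime_gt1 pp.
  have : p != 2%N by apply/eqP => E; rewrite E in po.
  by rewrite ltn_neqAle eq_sym => ->.
apply/eqP => /(congr1 val) E; have := val_Fp_nat pp 2.
by rewrite -[X in X = _]/(val (2 : 'F_p)) E modn_small.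
Qed.

Lemma cancel2 n (x : R) : odd p -> rdvd (P ^+ n) (2%:R * x) -> rdvd (P ^+ n) x.
Proof.
move=> po; elim: n x => [|n IH] x [y Hy]; first by exists x; rewrite expr0 mul1r.
have [z Hz] : rdvd (P ^+ n) x by apply: IH; exists (P * y); rewrite Hy exprSr mulrA.
have E2 : 2%:R * z = P * y.
  by apply: (Pn_cancel n); rewrite mulrCA -Hz Hy exprSr mulrA.
have : phi (2%:R * z) = 0 by apply: rdvd_phi; exists y.
rewrite rmorphM rmorph_nat => /eqP; rewrite mulf_eq0 (negbTE (two_Fp po)) /=.
move=> /eqP /phi_ker [w Hw].
by exists w; rewrite Hz Hw exprSr mulrA.
Qed.


Lemma phiBp (x y : R) : phi (x - y) = phi x - phi y. Proof. exact: phiB. Qed.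
Lemma phiMp (x y : R) : phi (x * y) = phi x * phi y. Proof. exact: phiM.2. Qed.
Lemma phi1p : phi 1 = 1. Proof. exact: phiM.1. Qed.
Lemma phi0p : phi 0 = 0. Proof. by rewrite -(subrr (0 : R)) phiBp subrr. Qed.
Lemma phiNp (x : R) : phi (- x) = - phi x.
Proof. by rewrite -sub0r phiBp phi0p sub0r. Qed.
Lemma phiDp (x y : R) : phi (x + y) = phi x + phi y.
Proof. by have := phiBp x (- y); rewrite opprK phiNp opprK. Qed.
Lemma phiXp (x : R) n : phi (x ^+ n) = phi x ^+ n.
Proof. by elim: n => [|n IH]; rewrite ?expr0 ?phi1p // !exprS phiMp IH. Qed.
Lemma phi_natp n : phi (n%:R) = n%:R.
Proof. by elim: n => [|n IH]; rewrite ?phi0p // !mulrS phiDp phi1p IH. Qed.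

Lemma phi_step (po : odd p) (zeta b b' c c' d t2 t1 t0 : R) :
  ~ (exists x : R, rdvd P (x ^+ 2 + zeta)) ->
  2%:R * d - (b ^+ 2 - b' ^+ 2) = P * t2 ->
  - (2%:R * (b * c - b' * c')) = P * t1 ->
  d * (2%:R * zeta) - (c ^+ 2 - c' ^+ 2) = P * t0 -> rdvd P d.
Proof.
move=> nsq F2 F1 F0.
have G2 : phi (2%:R * d - (b ^+ 2 - b' ^+ 2)) = 0 by apply: rdvd_phi; exists t2.
have G1 : phi (- (2%:R * (b * c - b' * c'))) = 0 by apply: rdvd_phi; exists t1.
have G0 : phi (d * (2%:R * zeta) - (c ^+ 2 - c' ^+ 2)) = 0.
  by apply: rdvd_phi; exists t0.
rewrite !(phiBp, phiMp, phiNp, phiXp, phi_natp) in G2 G1 G0.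
have nsqF : forall s : 'F_p, s ^+ 2 + phi zeta != 0.
  move=> s; apply/negP => /eqP Hs; apply: nsq; exists ((val s)%:R); apply: phi_ker.
  by rewrite phiDp phiXp phi_natp natr_Zp.
have two := two_Fp po.
have H1 : phi b * phi c = phi b' * phi c'.
  by move/eqP: G1; rewrite oppr_eq0 mulf_eq0 (negbTE two) subr_eq0 => /eqP.
have Hz : phi zeta * (phi b ^+ 2 - phi b' ^+ 2) = phi c ^+ 2 - phi c' ^+ 2.
  move/eqP: G2; rewrite subr_eq0 => /eqP <-.
  move/eqP: G0; rewrite subr_eq0 => /eqP <-.
  ring.
have Hb := @field_arg _ _ _ _ _ _ two nsqF H1 Hz.
apply: phi_ker.
by move/eqP: G2; rewrite Hb subrr subr0 mulf_eq0 (negbTE two) => /eqP.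
Qed.

End Zp.

Lemma polyE4 (R : comNzRingType) (a q B C : R) :
  ('X ^+ 2 + a%:P) ^+ 2 - q%:P * (B *: 'X + C%:P) ^+ 2 =
  'X ^+ 4 + (a *+ 2 - q * B ^+ 2)%:P * 'X ^+ 2 + (- (q * B * C *+ 2))%:P * 'X
   + (a ^+ 2 - q * C ^+ 2)%:P * 'X ^+ 0.
Proof.
rewrite -mul_polyC !(polyCD, polyCN, polyCB, polyCM, polyCMn, rmorphXn).
ring.
Qed.

Lemma coef4 (R : comNzRingType) (a q B C : R) i :
  (('X ^+ 2 + a%:P) ^+ 2 - q%:P * (B *: 'X + C%:P) ^+ 2)`_i =
  (i == 4)%:R + (a *+ 2 - q * B ^+ 2) * (i == 2)%:R
   + (- (q * B * C *+ 2)) * (i == 1)%:R + (a ^+ 2 - q * C ^+ 2) * (i == 0)%:R.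
Proof.
by rewrite polyE4 !coefD !coefCM !coefXn coefX.
Qed.

Lemma polyE2 (R : comNzRingType) (a : R) :
  ('X ^+ 2 + a%:P) ^+ 2 = 'X ^+ 4 + (a *+ 2)%:P * 'X ^+ 2 + (a ^+ 2)%:P * 'X ^+ 0.
Proof.
rewrite !(polyCD, polyCN, polyCB, polyCM, polyCMn, rmorphXn).
ring.
Qed.

Lemma coef2 (R : comNzRingType) (a : R) i :
  (('X ^+ 2 + a%:P) ^+ 2)`_i =
  (i == 4)%:R + (a *+ 2) * (i == 2)%:R + (a ^+ 2) * (i == 0)%:R.
Proof.
by rewrite polyE2 !coefD !coefCM !coefXn.
Qed.


Lemma eq_via (R : comNzRingType) (l r x y : R) : x = y -> l - r = x - y -> l = r.
Proof. by move=> -> h; apply/eqP; rewrite -subr_eq0 h subrr. Qed.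
Arguments eq_via {R l r x y}.

Theorem claim2 (p k : nat) (zeta A B C A' B' C' : Zpadic p) :
  prime p -> odd p ->
  (* -zeta is not a square modulo p *)
  ~ (exists x : Zpadic p, rdvd (p%:R) (x ^+ 2 + zeta)) ->
  rdvd (p%:R ^+ k) B -> rdvd (p%:R ^+ k) C ->
  rdvd (p%:R ^+ k) B' -> rdvd (p%:R ^+ k) C' ->
  polycong (p%:R ^+ (2 * k + 3))
    (('X ^+ 2 + (p%:R * A + zeta)%:P) ^+ 2
       - (p%:R ^+ 2)%:P * (B *: 'X + C%:P) ^+ 2)
    (('X ^+ 2 + (p%:R * A' + zeta)%:P) ^+ 2
       - (p%:R ^+ 2)%:P * (B' *: 'X + C'%:P) ^+ 2) ->
  rdvd (p%:R ^+ (2 * k + 2)) (A - A') /\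
  polycong (p%:R ^+ (2 * k + 3))
    (('X ^+ 2 + (p%:R * A + zeta)%:P) ^+ 2)
    (('X ^+ 2 + (p%:R * A' + zeta)%:P) ^+ 2).
Proof.
move=> pp po nsq [b Hb] [c Hc] [b' Hb'] [c' Hc'] Hcong.
have eP n : (p%:R : Zpadic p) ^+ (2 * k + n) = (p%:R ^+ k) ^+ 2 * p%:R ^+ n.
  by rewrite exprD mulnC exprM.
have [t2 E2] := Hcong 2%N; have [t1 E1] := Hcong 1%N; have [t0 E0] := Hcong 0%N.
rewrite !coef4 /= in E2 E1 E0.
rewrite !(mulr0, mulr1, addr0, add0r) eP Hb Hc Hb' Hc' in E2 E1 E0.
have [d HD] : rdvd ((p%:R : Zpadic p) ^+ (2 * k + 1)) (A - A').
  apply: (@cancel2 p pp _ _ po); exists (b ^+ 2 - b' ^+ 2 + p%:R * t2).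
  rewrite eP; apply: (@Pn_cancel p pp 1); apply: (eq_via E2); ring.
rewrite eP in HD.
have HA : A = A' + (p%:R ^+ k) ^+ 2 * p%:R ^+ 1 * d by rewrite -HD addrC subrK.
rewrite HA in E2 E0.
have F2 : 2%:R * d - (b ^+ 2 - b' ^+ 2) = p%:R * t2.
  apply: (@Pn_cancel p pp (2 * k + 2)); rewrite eP; apply: (eq_via E2); ring.
have F1 : - (2%:R * (b * c - b' * c')) = p%:R * t1.
  apply: (@Pn_cancel p pp (2 * k + 2)); rewrite eP; apply: (eq_via E1); ring.
have F0 : d * (2%:R * zeta) - (c ^+ 2 - c' ^+ 2) =
    p%:R * (t0 - d * (A' *+ 2 + (p%:R ^+ k) ^+ 2 * p%:R * d)).
  apply: (@Pn_cancel p pp (2 * k + 2)); rewrite eP; apply: (eq_via E0); ring.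
have [e He] := @phi_step p pp po zeta b b' c c' d _ _ _ nsq F2 F1 F0.
have HA2 : A = A' + (p%:R ^+ k) ^+ 2 * p%:R ^+ 2 * e by rewrite HA He; ring.
split.
  by exists e; rewrite eP HA2; ring.
move=> i; rewrite !coef2.
exists (e *+ 2 * (i == 2)%:R + e * (p%:R * (A' *+ 2 + (p%:R ^+ k) ^+ 2 * p%:R ^+ 2 * e)
   + 2%:R * zeta) * (i == 0)%:R).
rewrite eP HA2.
move: ((i == 4)%:R) ((i == 2)%:R) ((i == 0)%:R) => u v w.
move: (p%:R ^+ k) => Q.
ring.
Qed.
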